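(* Let $G$ be a graph, let $F(G)$ be the union of all tree components of $G$ and $cmp(F(G))$ the number of tree components of $G$, and let $k\ge1$. The following are equivalent: (a1) $M_k(G)$ has at least one circuit; (a2) $k\le \Delta G+cmp(F(G))$; (a3) $M_k(G)$ is a non-trivial matroid.
   Context: Graphs are finite, may have loops and parallel edges, and have no isolated vertices. $\Delta G=|E(G)|-|V(G)|$. For $X\subseteq E(G)$, $G\langle X\rangle$ is the subgraph with edge set $X$ and vertex set the vertices incident to $X$. For $k\ge0$, the $k$-circular matroid $M_k(G)$ is the matroid on $E(G)$ whose circuits are the inclusion-minimal members of $\{C\subseteq E(G):C\neq\emptyset,\ |C|=|V(G\langle C\rangle)|+k\}$. A matroid on $E$ is trivial if $E$ is a base or $E$ is a cobase (i.e. $E\setminus\emptyset$ complement of a base is $E$), and non-trivial otherwise; equivalently, non-trivial means it has at least one circuit and at least one cocircuit. *)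

(* Defs.v *)
From mathcomp Require Import all_boot all_order all_algebra.
Set Implicit Arguments. Unset Strict Implicit. Unset Printing Implicit Defensive.

(* A finite multigraph (loops and parallel edges allowed): vertex type V,
   edge type E, each edge e has ends (ends e).1 and (ends e).2
   (equal ends = loop). *)
Section Graphs.
Variables (V E : finType) (ends : E -> V * V).

Definition incident (e : E) (v : V) : bool :=
  (v == (ends e).1) || (v == (ends e).2).

Definition no_isolated : Prop := forall v : V, exists e : E, incident e v.

Definition verts_of (X : {set E}) : {set V} :=
  [set v | [exists e in X, incident e v]].

Definition deltaG : int := (#|E|)%:Z - (#|V|)%:Z.

Definition kcirc_family (k : nat) (C : {set E}) : bool :=
  (C != set0) && (#|C| == #|verts_of C| + k).

Definition is_circuit (k : nat) (C : {set E}) : bool :=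
  minset (kcirc_family k) C.

Definition indep (k : nat) (X : {set E}) : bool :=
  [forall C : {set E}, is_circuit k C ==> ~~ (C \subset X)].

Definition is_base (k : nat) (B : {set E}) : bool := maxset (indep k) B.

(* trivial: E is a base, or E is a cobase (i.e. the empty set is a base) *)
Definition trivial_matroid (k : nat) : bool :=
  is_base k setT || is_base k set0.

Definition nontrivial_matroid (k : nat) : bool := ~~ trivial_matroid k.

Definition adj : rel V := fun u v =>
  [exists e, (((ends e).1 == u) && ((ends e).2 == v))
          || (((ends e).1 == v) && ((ends e).2 == u))].

Definition component (u : V) : {set V} := [set v | connect adj u v].

Definition components : {set {set V}} := [set component u | u : V].

Definition edges_in (S : {set V}) : {set E} :=
  [set e | ((ends e).1 \in S) && ((ends e).2 \in S)].

(* a (connected) component S is a tree iff |E(S)| = |S| - 1 *)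
Definition tree_component (S : {set V}) : bool :=
  #|edges_in S| + 1 == #|S|.

Definition n_tree_components : nat :=
  #|[set S in components | tree_component S]|.

End Graphs.

(* Main.v *)
Require Import Defs.
From mathcomp Require Import all_boot all_order all_algebra.
From mathcomp Require Import zify.
Set Implicit Arguments. Unset Strict Implicit. Unset Printing Implicit Defensive.

Section Proofs.
Variables (V E : finType) (ends : E -> V * V).
Local Notation adj := (adj ends).
Local Notation component := (component ends).
Local Notation components := (components ends).
Local Notation edges_in := (edges_in ends).
Local Notation verts_of := (verts_of ends).
Local Notation tree_component := (tree_component ends).

Lemma adj_sym : symmetric adj.
Proof. by move=> u v; apply/existsP/existsP => -[e He]; exists e; rewrite orbC. Qed.

Lemma csym u v : connect adj u v = connect adj v u.
Proof. exact: (sym_connect_sym adj_sym). Qed.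

Lemma adj_ends e : adj (ends e).1 (ends e).2.
Proof. by apply/existsP; exists e; rewrite !eqxx. Qed.

Lemma comp_eq u v : connect adj u v -> component v = component u.
Proof.
move=> Huv; apply/setP => x; rewrite !inE; apply/idP/idP => H.
  exact: connect_trans Huv H.
by rewrite csym in Huv; exact: connect_trans Huv H.
Qed.

Lemma mem_comp_iff u v : (component v == component u) = (v \in component u).
Proof.
apply/eqP/idP => [<-|]; first by rewrite inE connect0.
by rewrite inE => /comp_eq.
Qed.

Lemma edges_in_comp u e : (e \in edges_in (component u)) = ((ends e).1 \in component u).
Proof.
rewrite inE; apply/andP/idP => [[]//|H]; split => //.
move: H; rewrite !inE => H; exact: connect_trans H (connect1 (adj_ends e)).
Qed.

Lemma incident_comp u v e : v \in component u -> incident ends e v ->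
  e \in edges_in (component u).
Proof.
move=> Hv /orP [/eqP Hv1|/eqP Hv2]; rewrite edges_in_comp; first by rewrite -Hv1.
move: Hv; rewrite Hv2 !inE => H; apply: connect_trans H _.
by rewrite csym; apply: connect1; exact: adj_ends.
Qed.

Lemma card_split_V (X : {set V}) : #|X| = \sum_(S in components) #|X :&: S|.
Proof.
rewrite -sum1_card (partition_big component (mem components)) /=; last first.
  by move=> v _; apply/imsetP; exists v.
apply: eq_bigr => S /imsetP [u _ ->]; rewrite -sum1_card; apply: eq_bigl => v.
by rewrite mem_comp_iff !inE.
Qed.

Lemma card_split_E (Y : {set E}) : #|Y| = \sum_(S in components) #|Y :&: edges_in S|.
Proof.
rewrite -sum1_card (partition_big (fun e => component (ends e).1) (mem components)) /=; last first.
  by move=> e _; apply/imsetP; exists (ends e).1.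
apply: eq_bigr => S /imsetP [u _ ->]; rewrite -sum1_card; apply: eq_bigl => e.
by rewrite mem_comp_iff in_setI edges_in_comp.
Qed.

Definition bnd (S R : {set V}) : {set E} :=
  [set e in edges_in S | ((ends e).1 \notin R) || ((ends e).2 \notin R)].

Lemma boundary r w (R : {set V}) : connect adj r w -> r \in R -> w \notin R ->
  exists x y, [/\ adj x y, x \in R & y \notin R].
Proof.
case/connectP => p; elim: p r => [|z p IH] r /=; first by move=> _ -> ->.
case/andP => Hrz Hp Hlast Hr Hw.
case: (boolP (z \in R)) => Hz; first exact: IH Hp Hlast Hz Hw.
by exists r, z.
Qed.

Lemma K u (R : {set V}) : R \subset component u -> R != set0 ->
  #|component u :\: R| <= #|bnd (component u) R|.
Proof.
move Hn: #|component u :\: R| => n.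
elim: n R Hn => [|n IH] R Hn HRS HR0; first by [].
have [w Hw] : exists w, w \in component u :\: R by apply/set0Pn; rewrite -card_gt0 Hn.
have [r Hr] := set0Pn _ HR0.
have Hru : r \in component u by apply: (subsetP HRS).
move: (Hw); rewrite !inE => /andP [HwR Hwu].
have Hrw : connect adj r w by rewrite inE csym in Hru; apply: connect_trans Hru Hwu.
have [x [y [Hxy HxR HyR]]] := boundary Hrw Hr HwR.
have Hxu : x \in component u by apply: (subsetP HRS).
have Hyu : y \in component u by move: Hxu; rewrite !inE => H; apply: connect_trans H (connect1 Hxy).
have [e He] := existsP Hxy.
have HeS : e \in edges_in (component u).
  by rewrite edges_in_comp; case/orP: He => /andP [/eqP -> _].
have HR' : y |: R \subset component u by rewrite subUset sub1set Hyu HRS.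
have Hn' : #|component u :\: (y |: R)| = n.
  move: Hn; rewrite (cardsD1 y).
  have -> : y \in component u :\: R by rewrite in_setD HyR Hyu.
  move=> -[<-].
  by apply: eq_card => v; rewrite !inE; case: (v == y); case: (v \in R).
have HR0' : y |: R != set0 by apply/set0Pn; exists y; rewrite !inE eqxx.
have Hle := IH _ Hn' HR' HR0'.
apply: leq_ltn_trans Hle _; apply: proper_card; apply/properP; split.
  apply/subsetP => f; rewrite !inE => /andP [-> ]; rewrite !negb_or.
  by case/orP => /andP [_ ->]; rewrite ?orbT.
exists e.
  rewrite /bnd inE HeS /=; case/orP: He => /andP [/eqP -> /eqP ->]; by rewrite HyR ?orbT.
rewrite /bnd inE negb_and; apply/orP; right; rewrite negb_or !negbK.
by case/orP: He => /andP [/eqP -> /eqP ->]; rewrite !in_setU1 eqxx HxR ?orbT.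
Qed.


Lemma per_comp u (C : {set E}) :
  #|C :&: edges_in (component u)| + #|component u| <=
  #|edges_in (component u)| + #|verts_of C :&: component u|
    + tree_component (component u).
Proof.
have HCR : forall e, e \in C :&: edges_in (component u) ->
    ((ends e).1 \in verts_of C :&: component u) &&
    ((ends e).2 \in verts_of C :&: component u).
  move=> e; rewrite in_setI => /andP [HeC HeS]; move: (HeS); rewrite inE => /andP [H1 H2].
  rewrite !in_setI H1 H2 !andbT /verts_of !inE; apply/andP; split; apply/existsP; exists e;
    by rewrite HeC /incident eqxx ?orbT.
have Hsub : forall R, bnd (component u) R \subset edges_in (component u).
  by move=> R; apply/subsetP => e; rewrite inE => /andP[].
case: (eqVneq (verts_of C :&: component u) set0) => HR0.
  have H0 : C :&: edges_in (component u) = set0.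
    apply/setP => e; rewrite [RHS]inE; apply/negbTE/negP => He.
    by have := HCR e He; rewrite HR0 !inE.
  have Hu1 : [set u] \subset component u by rewrite sub1set inE connect0.
  have Hu0 : [set u] != set0 by apply/set0Pn; exists u; rewrite inE.
  have HK := K Hu1 Hu0.
  have H1 : #|component u| <= #|component u :\: [set u]| + 1.
    rewrite -(cardsID [set u] (component u)) addnC leq_add2l.
    by apply: leq_trans (subset_leq_card (subsetIr _ _)) _; rewrite cards1.
  have H2 := subset_leq_card (Hsub [set u]).
  rewrite H0 cards0 /tree_component; case: eqP => /= H; lia.
have HbR : verts_of C :&: component u \subset component u by apply: subsetIr.
have HK := K HbR HR0.
have Hdis : (C :&: edges_in (component u)) :&: bnd (component u) (verts_of C :&: component u) = set0.
  apply/setP => e; rewrite [RHS]inE; apply/negbTE/negP; rewrite in_setI => /andP [He].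
  by have := HCR e He; rewrite /bnd inE => /andP [-> ->]; rewrite andbF.
have Hun : (C :&: edges_in (component u)) :|: bnd (component u) (verts_of C :&: component u)
    \subset edges_in (component u).
  by rewrite subUset Hsub subsetIr.
have := cardsUI (C :&: edges_in (component u)) (bnd (component u) (verts_of C :&: component u)).
rewrite Hdis cards0 addn0 => Hu.
have Hle := subset_leq_card Hun.
have H1 : #|component u| <= #|component u :\: (verts_of C :&: component u)| + #|verts_of C :&: component u|.
  rewrite -(cardsID (verts_of C :&: component u) (component u)) addnC leq_add2l.
  exact: subset_leq_card (subsetIr _ _).
lia.
Qed.

Lemma ntree_sum : n_tree_components ends = \sum_(S in components) tree_component S.
Proof.
rewrite /n_tree_components -sum1_card big_mkcond /= [RHS]big_mkcond /=.
by apply: eq_bigr => S _; rewrite inE; case: (S \in components); case: tree_component.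
Qed.

Lemma global_ineq (C : {set E}) :
  #|C| + #|V| <= #|E| + #|verts_of C| + n_tree_components ends.
Proof.
rewrite (card_split_E C) -(cardsT V) -(cardsT E) (card_split_V setT) (card_split_E setT).
rewrite (card_split_V (verts_of C)) ntree_sum -!big_split /=.
apply: leq_sum => S /imsetP [u _ ->]; rewrite !setTI; exact: per_comp.
Qed.

Lemma C0_ineq : exists C : {set E},
  #|E| + #|verts_of C| + n_tree_components ends <= #|C| + #|V|.
Proof.
exists [set e | ~~ tree_component (component (ends e).1)].
set C0 := [set e | _].
rewrite (card_split_E C0) -(cardsT V) -(cardsT E) (card_split_V setT) (card_split_E setT).
rewrite (card_split_V (verts_of C0)) ntree_sum -!big_split /=.
apply: leq_sum => S /imsetP [u _ ->]; rewrite !setTI.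
case Ht: (tree_component (component u)).
  have H0 : verts_of C0 :&: component u = set0.
    apply/setP => v; rewrite [RHS]inE; apply/negbTE/negP; rewrite in_setI => /andP [Hv HvS].
    move: Hv; rewrite /verts_of inE => /existsP [e /andP [HeC Hinc]].
    have HeS := incident_comp HvS Hinc.
    move: HeS; rewrite edges_in_comp -mem_comp_iff => /eqP Hc.
    by move: HeC; rewrite inE Hc Ht.
  rewrite H0 cards0; move: Ht; rewrite /tree_component => /eqP Ht; lia.
have H1 : #|edges_in (component u)| <= #|C0 :&: edges_in (component u)|.
  apply: subset_leq_card; apply/subsetP => e He; rewrite in_setI He andbT inE.
  by move: He; rewrite edges_in_comp -mem_comp_iff => /eqP ->; rewrite Ht.
have H2 : #|verts_of C0 :&: component u| <= #|component u|.
  exact: subset_leq_card (subsetIr _ _).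
lia.
Qed.


Lemma ivt k : 1 <= k -> forall C : {set E}, #|verts_of C| + k <= #|C| ->
  exists C', kcirc_family ends k C'.
Proof.
move=> Hk C; move Hn: #|C| => n; elim: n C Hn => [|n IH] C Hn HC; first lia.
case: (eqVneq #|C| (#|verts_of C| + k)) => Heq.
  exists C; rewrite /kcirc_family Heq eqxx andbT -card_gt0; lia.
have [e He] : exists e, e \in C by apply/set0Pn; rewrite -card_gt0; lia.
have Hc := cardsD1 e C; rewrite He in Hc.
have Hv : #|verts_of (C :\ e)| <= #|verts_of C|.
  apply: subset_leq_card; apply/subsetP => v; rewrite /verts_of !inE.
  by case/existsP => f /andP [Hf Hi]; apply/existsP; exists f; move: Hf; rewrite !inE => /andP [_ ->].
apply: (IH (C :\ e)); lia.
Qed.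

Lemma circuit_iff k : 1 <= k ->
  (exists C, is_circuit ends k C) <-> exists C : {set E}, #|verts_of C| + k <= #|C|.
Proof.
move=> Hk; split.
  by move=> [C /minsetP [/andP [_ /eqP HC] _]]; exists C; rewrite HC.
move=> [C HC]; have [C' HC'] := ivt Hk HC.
by have [A HA _] := minset_exists HC'; exists A.
Qed.

Lemma circuit_big k C : is_circuit ends k C -> 1 + k <= #|C|.
Proof.
move/minsetP => [/andP [HC0 /eqP HC] _]; rewrite HC leq_add2r.
have [f Hf] := set0Pn _ HC0; rewrite card_gt0; apply/set0Pn; exists (ends f).1.
by rewrite /verts_of inE; apply/existsP; exists f; rewrite Hf /incident eqxx.
Qed.

Lemma nontriv_iff k : 1 <= k ->
  nontrivial_matroid ends k <-> (exists C, is_circuit ends k C).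
Proof.
move=> Hk; rewrite /nontrivial_matroid /trivial_matroid negb_or; split.
  case/andP => /maxsetP HT _.
  have : ~~ indep ends k setT.
    apply/negP => Hi; apply: HT; split => // B _ HB; apply/eqP.
    by rewrite eqEsubset HB subsetT.
  by case/forallPn => C; rewrite subsetT /= implybF negbK => HC; exists C.
move=> [C HC]; apply/andP; split.
  apply/negP => /maxsetP [/forallP /(_ C)]; by rewrite HC subsetT.
have [e He] : exists e, e \in C.
  by apply/set0Pn; move/minsetP: HC => [/andP [] ] .
apply/negP => /maxsetP [_ H0].
have Hi : indep ends k [set e].
  apply/forallP => C'; apply/implyP => HC'; apply/negP => Hsub.
  have := circuit_big HC'; have := subset_leq_card Hsub; rewrite cards1; lia.
have := H0 _ Hi (sub0set _) => /setP /(_ e); by rewrite !inE eqxx.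
Qed.

End Proofs.

Theorem mainTheorem10 (V E : finType) (ends : E -> V * V) (k : nat) :
  no_isolated ends -> (1 <= k)%N ->
  [/\ ((exists C : {set E}, is_circuit ends k C) <->
       ((k%:Z <= deltaG V E + (n_tree_components ends)%:Z)%R)),
      ((k%:Z <= deltaG V E + (n_tree_components ends)%:Z)%R <->
       nontrivial_matroid ends k)
    & (nontrivial_matroid ends k <-> (exists C : {set E}, is_circuit ends k C))].
Proof.
move=> _ Hk.
have Ha2 : (k%:Z <= deltaG V E + (n_tree_components ends)%:Z)%R <->
    k + #|V| <= #|E| + n_tree_components ends.
  by rewrite /deltaG; split => H; lia.
have H12 : (exists C : {set E}, is_circuit ends k C) <->
    k + #|V| <= #|E| + n_tree_components ends.
  rewrite circuit_iff //; split.
    by move=> [C HC]; have := global_ineq ends C; lia.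
  move=> H; have [C HC] := C0_ineq ends; exists C; lia.
have H3 := nontriv_iff ends Hk.
split; tauto.
Qed.
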